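(* Let $S,T$ be disjoint finite sets with a total order $\prec$ on $S\cup T$ in which every element of $S$ precedes every element of $T$. Let $R\subseteq S\times T$ be a relation such that if $(s,t)\in R$, then $(s',t')\in R$ for all $s'\in S,t'\in T$ with $s\preceq s'\prec t'\preceq t$. Let $y:R\to\mathbb{R}_{\ge0}$ with $\gamma:=\sum_{(s,t)\in R}y_{s,t}>0$. Define $$s^*=\max_{\prec}\Big\{s\in S:\ \sum_{s'\succeq s}\ \sum_{t:(s',t)\in R}y_{s',t}\ge \gamma/2\Big\},\qquad t^*=\min_{\prec}\Big\{t\in T:\ \sum_{t'\preceq t}\ \sum_{s:(s,t')\in R}y_{s,t'}\ge\gamma/2\Big\},$$ and $\tilde S=\{s\in S: s\succeq s^*\}$, $\tilde T=\{t\in T: t\preceq t^*\}$. Then $\tilde S\times\tilde T\subseteq R$.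
   Context: $\preceq$ denotes the reflexive version of the total order $\prec$; $\max_\prec$ and $\min_\prec$ denote the largest and smallest element with respect to $\prec$. *)

(* Defs.v *)
From HB Require Import structures.
From mathcomp Require Import all_boot all_order all_algebra.
Set Implicit Arguments. Unset Strict Implicit. Unset Printing Implicit Defensive.
Import Order.TTheory GRing.Theory Num.Theory.
Local Open Scope order_scope.

Definition is_max_of (d : Order.disp_t) (X : finOrderType d) (A : {set X}) (x : X) :=
  x \in A /\ forall a, a \in A -> a <= x.
Definition is_min_of (d : Order.disp_t) (X : finOrderType d) (A : {set X}) (x : X) :=
  x \in A /\ forall a, a \in A -> x <= a.

(* Main.v *)
Require Import Defs.
From HB Require Import structures.
From mathcomp Require Import all_boot all_order all_algebra.
Import Order.TTheory GRing.Theory Num.Theory.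

Section H.
Context (d : Order.disp_t) (X : finOrderType d) (K : realFieldType)
  (S T : {set X}) (Rl : {set X * X}) (y : X -> X -> K).
Hypothesis HR : forall p, p \in Rl -> (p.1 \in S) && (p.2 \in T).

Lemma sumS (P : pred X) :
  (\sum_(s in S | P s) \sum_(t in T | (s, t) \in Rl) y s t =
   \sum_(p in Rl | P p.1) y p.1 p.2)%R.
Proof.
rewrite pair_big_dep; apply: eq_bigl => [[a b]] /=.
case Hab: ((a, b) \in Rl); last by rewrite !andbF.
by move/andP: (HR _ Hab) => /= [-> ->]; rewrite andbT andbC.
Qed.

Lemma sumT (P : pred X) :
  (\sum_(t in T | P t) \sum_(s in S | (s, t) \in Rl) y s t =
   \sum_(p in Rl | P p.2) y p.1 p.2)%R.
Proof.
rewrite (exchange_big_dep (fun s => s \in S)) /=; last by move=> i j _ /andP[->].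
rewrite pair_big_dep; apply: eq_bigl => [[a b]] /=.
case Hab: ((a, b) \in Rl); last by rewrite !andbF.
by move/andP: (HR _ Hab) => /= [-> ->] /=; rewrite ?andbT.
Qed.
End H.

Theorem lemmaB2 (d : Order.disp_t) (X : finOrderType d) (K : realFieldType)
  (S T : {set X}) (Rl : {set X * X}) (y : X -> X -> K)
  (sstar tstar : X) :
  [disjoint S & T] ->
  (forall s t, s \in S -> t \in T -> (s < t)%O) ->
  (forall p, p \in Rl -> (p.1 \in S) && (p.2 \in T)) ->
  (forall s t s' t', (s, t) \in Rl -> s' \in S -> t' \in T ->
     (s <= s')%O -> (s' < t')%O -> (t' <= t)%O -> (s', t') \in Rl) ->
  (forall p, p \in Rl -> (0 <= y p.1 p.2)%R) ->
  let gamma := (\sum_(p in Rl) y p.1 p.2)%R in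
  (0 < gamma)%R ->
  is_max_of [set s in S | (gamma / 2 <=
      \sum_(s' in S | (s <= s')%O) \sum_(t in T | (s', t) \in Rl) y s' t)%R] sstar ->
  is_min_of [set t in T | (gamma / 2 <=
      \sum_(t' in T | (t' <= t)%O) \sum_(s in S | (s, t') \in Rl) y s t')%R] tstar ->
  forall s t, s \in S -> (sstar <= s)%O -> t \in T -> (t <= tstar)%O -> (s, t) \in Rl.
Proof.
move=> _ HST HR Hcl Hy gamma Hg [Hsm Hsmax] [Htm Htmin] s t Hs Hss Ht Htt.
move: Hsm Htm; rewrite !inE => /andP[HsS _] /andP[HtT _].
suff Hst : (sstar, tstar) \in Rl by exact: (Hcl _ _ _ _ Hst Hs Ht Hss (HST _ _ Hs Ht) Htt).
apply/negPn/negP => Hn.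
have Hcov : forall p, p \in Rl -> (sstar < p.1)%O || (p.2 < tstar)%O.
  move=> [a b] Hab /=.
  case: (ltP sstar a) => //= Ha; case: (ltP b tstar) => //= Hb; 
  by move: Hn; rewrite (Hcl _ _ _ _ Hab HsS HtT Ha (HST _ _ HsS HtT) Hb).
have Hg2 : (0 < gamma / 2)%R by rewrite divr_gt0.
have P1 : (\sum_(p in Rl | (sstar < p.1)%O) y p.1 p.2 < gamma / 2)%R.
  case: (pickP [pred p | (p \in Rl) && (sstar < p.1)%O]) => [p0 Hp0|H0]; last first.
    by rewrite big_pred0 // => p; have := H0 p.
  case: (arg_minP (fun p : X * X => p.1) Hp0) => q /andP[Hq Hq1] Hmin.
  have Hq1S : q.1 \in S by case/andP: (HR _ Hq).
  have Hnot : q.1 \notin [set s in S | (gamma / 2 <=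
      \sum_(s' in S | (s <= s')%O) \sum_(t in T | (s', t) \in Rl) y s' t)%R].
    by apply/negP => Hin; have := Hsmax _ Hin; rewrite leNgt Hq1.
  move: Hnot; rewrite inE Hq1S /= -ltNge sumS // => Hlt.
  rewrite (eq_bigl (fun p : X * X => (p \in Rl) && (q.1 <= p.1)%O)) // => p /=.
  case Hp: (p \in Rl) => //=; apply/idP/idP => H.
  - by apply: (Hmin p); rewrite inE /= Hp.
  - exact: lt_le_trans Hq1 H.
have P2 : (\sum_(p in Rl | (p.2 < tstar)%O) y p.1 p.2 < gamma / 2)%R.
  case: (pickP [pred p | (p \in Rl) && (p.2 < tstar)%O]) => [p0 Hp0|H0]; last first.
    by rewrite big_pred0 // => p; have := H0 p.
  case: (arg_maxP (fun p : X * X => p.2) Hp0) => q /andP[Hq Hq1] Hmax.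
  have Hq1T : q.2 \in T by case/andP: (HR _ Hq).
  have Hnot : q.2 \notin [set t in T | (gamma / 2 <=
      \sum_(t' in T | (t' <= t)%O) \sum_(s in S | (s, t') \in Rl) y s t')%R].
    by apply/negP => Hin; have := Htmin _ Hin; rewrite leNgt Hq1.
  move: Hnot; rewrite inE Hq1T /= -ltNge sumT // => Hlt.
  rewrite (eq_bigl (fun p : X * X => (p \in Rl) && (p.2 <= q.2)%O)) // => p /=.
  case Hp: (p \in Rl) => //=; apply/idP/idP => H.
  - by apply: (Hmax p); rewrite inE /= Hp.
  - exact: le_lt_trans H Hq1.
have : (gamma <= \sum_(p in Rl | (sstar < p.1)%O) y p.1 p.2 +
                 \sum_(p in Rl | (p.2 < tstar)%O) y p.1 p.2)%R.
  rewrite /gamma (bigID (fun p : X * X => (sstar < p.1)%O)) /= lerD2l.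
  rewrite [X in (_ <= X)%R]big_mkcond [X in (X <= _)%R]big_mkcond /=.
  apply: ler_sum => p _.
  case Hp: (p \in Rl) => //=.
  have Hyp := Hy _ Hp.
  move: (Hcov _ Hp); case: (sstar < p.1)%O; case: (p.2 < tstar)%O => //=.
move=> Hle; have := le_lt_trans Hle (ltrD P1 P2).
by rewrite -splitr ltxx.
Qed.
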